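(* For every $A\subseteq[n]$, with $$C_A=\sum_{\{i,j\}\subseteq A}\Gamma_{\{i,j\}}\Gamma_{A\setminus\{i,j\}}-(|A|-2)\sum_{i\in A}\mu_i\,\Gamma_{A\setminus\{i\}}$$ (first sum over the 2-element subsets of $A$), one has $$C_A=\frac{|A|(|A|-3)}{4}\,\Gamma_A .$$
   Context: Fix $n\ge1$ and real parameters $\mu_1,\dots,\mu_n>0$; write $[n]=\{1,\dots,n\}$. For $i\in[n]$, $r_i$ is the reflection $(r_if)(x)=f(x_1,\dots,-x_i,\dots,x_n)$ and $T_i=\partial_{x_i}+\frac{\mu_i}{x_i}(1-r_i)$. $\mathcal{C}\ell_n$ is generated by $e_1,\dots,e_n$ with $e_ie_j+e_je_i=-2\delta_{ij}$, $V$ is a fixed left $\mathcal{C}\ell_n$-module, and operators act on $\mathcal{P}(\mathbb{R}^n)\otimes V$ with $x_i,T_i,r_i$ acting on the polynomial factor and $e_i$ on $V$. For $A\subseteq[n]$: $\underline{D}_A=\sum_{i\in A}e_iT_i$, $\underline{x}_A=\sum_{i\in A}e_ix_i$, $\underline{S}_A=\frac12([\underline{x}_A,\underline{D}_A]-1)$, $\Gamma_A=\underline{S}_A\prod_{i\in A}r_i$ (empty sums $0$, empty products $1$). *)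

(* Defs.v *)
(* P(R^n) (x) V is represented by coefficient functions:
   an element is F : multi-index -> V, F a = V-coefficient of x^a,
   with finite support (polynomials). *)
From HB Require Import structures.
From mathcomp Require Import all_boot all_order all_algebra.
Set Implicit Arguments. Unset Strict Implicit. Unset Printing Implicit Defensive.
Import Order.TTheory GRing.Theory Num.Theory.
Local Open Scope ring_scope.

Section Dunkl.
Variables (R : realFieldType) (n : nat) (V : lmodType R).
Variable mu : 'I_n -> R.
Variable e : 'I_n -> V -> V.

Definition midx := {ffun 'I_n -> nat}.
Definition PV := midx -> V.

Definition is_poly (F : PV) : Prop :=
  exists N : nat, forall a : midx, (N <= \sum_(i < n) a i)%N -> F a = 0.

Definition upd (i : 'I_n) (a : midx) (k : nat) : midx :=
  [ffun j => if j == i then k else a j].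

(* multiplication by x_i *)
Definition xop (i : 'I_n) (F : PV) : PV :=
  fun a => if (0 < a i)%N then F (upd i a (a i).-1) else 0.
Definition dop (i : 'I_n) (F : PV) : PV :=
  fun a => (a i).+1%:R *: F (upd i a (a i).+1).
Definition rop (i : 'I_n) (F : PV) : PV :=
  fun a => (-1) ^+ (a i) *: F a.
(* division by x_i (exact on the image of 1 - r_i) *)
Definition divx (i : 'I_n) (F : PV) : PV :=
  fun a => F (upd i a (a i).+1).
Definition Top (i : 'I_n) (F : PV) : PV :=
  fun a => dop i F a + mu i *: divx i (fun b => F b - rop i F b) a.
Definition eop (i : 'I_n) (F : PV) : PV := fun a => e i (F a).

Definition DA (A : {set 'I_n}) (F : PV) : PV :=
  fun a => \sum_(i in A) eop i (Top i F) a.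
Definition xA (A : {set 'I_n}) (F : PV) : PV :=
  fun a => \sum_(i in A) eop i (xop i F) a.
Definition SA (A : {set 'I_n}) (F : PV) : PV :=
  fun a => 2^-1 *: (xA A (DA A F) a - DA A (xA A F) a - F a).
Definition rA (A : {set 'I_n}) (F : PV) : PV :=
  fun a => (-1) ^+ (\sum_(i in A) a i) *: F a.
Definition GammaA (A : {set 'I_n}) (F : PV) : PV := SA A (rA A F).

Definition CA (A : {set 'I_n}) (F : PV) : PV :=
  fun a =>
    \sum_(i in A) \sum_(j in A | (i < j)%N)
        GammaA [set i; j] (GammaA (A :\ i :\ j) F) a
    - (#|A|%:R - 2) *: \sum_(i in A) (mu i *: GammaA (A :\ i) F a).
End Dunkl.

(* Main.v *)
Require Import Defs.
From HB Require Import structures.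
From mathcomp Require Import all_boot all_order all_algebra.
From Stdlib Require Import FunctionalExtensionality.
From mathcomp Require Import ring.
Set Implicit Arguments. Unset Strict Implicit. Unset Printing Implicit Defensive.
Import Order.TTheory GRing.Theory Num.Theory.
Local Open Scope ring_scope.

Section Work.
Variables (R : realFieldType) (n : nat) (V : lmodType R).
Variable mu : 'I_n -> R.
Variable e : 'I_n -> {linear V -> V}.
Hypothesis cliff : forall (i j : 'I_n) (v : V),
      e i (e j v) + e j (e i v) = (if i == j then - 2 else 0) *: v.

Local Notation PV := (PV n V).
Local Notation E := (fun i => (e i : V -> V)).

Lemma updE (i : 'I_n) a k j : upd i a k j = if j == i then k else a j.
Proof. by rewrite ffunE. Qed.

Lemma upd_id (i : 'I_n) a : upd i a (a i) = a.
Proof. by apply/ffunP => j; rewrite updE; case: eqP => // ->. Qed.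

Lemma upd_upd (i : 'I_n) a k k' : upd i (upd i a k) k' = upd i a k'.
Proof. by apply/ffunP => j; rewrite !updE; case: eqP. Qed.

Lemma upd_comm (i j : 'I_n) a k k' : i != j ->
  upd i (upd j a k) k' = upd j (upd i a k') k.
Proof.
move=> ij; apply/ffunP => l; rewrite !updE.
case: (eqVneq l i) => [->|li]; first by rewrite (negbTE ij).
by [].
Qed.

Lemma upd_ii (i : 'I_n) a k : upd i a k i = k.
Proof. by rewrite updE eqxx. Qed.

Lemma upd_ij (i j : 'I_n) a k : j != i -> upd i a k j = a j.
Proof. by move=> ji; rewrite updE (negbTE ji). Qed.

Definition tc (i : 'I_n) (k : nat) : R := k.+1%:R + mu i * (1 - (-1) ^+ k.+1).

Lemma TopE i (F : PV) a : Top mu i F a = tc i (a i) *: F (upd i a (a i).+1).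
Proof.
rewrite /Top /dop /divx /rop upd_ii /tc.
by rewrite -{2}(scale1r (F _)) -scalerBl scalerA -scalerDl mulrC.
Qed.

Definition linop (O : PV -> PV) := forall (c : R) (F G : PV),
  O (fun b => c *: F b + G b) = (fun b => c *: O F b + O G b).

Lemma linop0 O : linop O -> O (fun _ => 0) = (fun _ => 0).
Proof.
move=> lO; have := lO 1 (fun _ => 0) (fun _ => 0).
have -> : (fun b : midx n => 1 *: (0 : V) + 0) = (fun _ => 0).
  by apply: functional_extensionality => b; rewrite scaler0 addr0.
move=> h; apply: functional_extensionality => b.
have := congr1 (fun f => f b) h => /=; rewrite scale1r => hx.
have : O (fun _ => 0) b + O (fun _ => 0) b - O (fun _ => 0) b
     = O (fun _ => 0) b - O (fun _ => 0) b by rewrite -hx.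
by rewrite addrK subrr.
Qed.

Lemma linopD O : linop O -> forall F G,
  O (fun b => F b + G b) = (fun b => O F b + O G b).
Proof.
move=> lO F G; have := lO 1 F G.
have -> : (fun b => 1 *: F b + G b) = (fun b => F b + G b).
  by apply: functional_extensionality => b; rewrite scale1r.
move=> ->; apply: functional_extensionality => b; by rewrite scale1r.
Qed.

Lemma linopZ O : linop O -> forall c F,
  O (fun b => c *: F b) = (fun b => c *: O F b).
Proof.
move=> lO c F; have := lO c F (fun _ => 0).
have -> : (fun b => c *: F b + 0) = (fun b => c *: F b).
  by apply: functional_extensionality => b; rewrite addr0.
move=> ->; rewrite linop0 //; apply: functional_extensionality => b; by rewrite addr0.
Qed.

Lemma linop_sum O : linop O -> forall (I : Type) (r : seq I) (P : pred I) (h : I -> PV),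
  O (fun b => \sum_(t <- r | P t) h t b) = (fun b => \sum_(t <- r | P t) O (h t) b).
Proof.
move=> lO I r P h; elim: r => [|x r IH].
  have -> : (fun b => \sum_(t <- [::] | P t) h t b) = (fun _ => 0 : V).
    by apply: functional_extensionality => b; rewrite big_nil.
  rewrite linop0 //; apply: functional_extensionality => b; by rewrite big_nil.
case Px: (P x).
  have -> : (fun b => \sum_(t <- x :: r | P t) h t b) =
            (fun b => h x b + \sum_(t <- r | P t) h t b).
    by apply: functional_extensionality => b; rewrite big_cons Px.
  rewrite linopD // IH; apply: functional_extensionality => b; by rewrite big_cons Px.
have -> : (fun b => \sum_(t <- x :: r | P t) h t b) =
          (fun b => \sum_(t <- r | P t) h t b).
  by apply: functional_extensionality => b; rewrite big_cons Px.
rewrite IH; apply: functional_extensionality => b; by rewrite big_cons Px.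
Qed.

Lemma linop_comp O1 O2 : linop O1 -> linop O2 -> linop (fun F => O1 (O2 F)).
Proof. by move=> l1 l2 c F G; rewrite l2 l1. Qed.

Lemma linop_xop i : linop (xop i).
Proof.
move=> c F G; apply: functional_extensionality => b; rewrite /xop.
by case: ifP => _; rewrite ?scaler0 ?addr0.
Qed.

Lemma linop_Top i : linop (Top mu i).
Proof.
move=> c F G; apply: functional_extensionality => b; rewrite !TopE.
by rewrite scalerDr !scalerA mulrC.
Qed.

Lemma linop_rop i : linop (rop i).
Proof.
move=> c F G; apply: functional_extensionality => b; rewrite /rop.
by rewrite scalerDr !scalerA mulrC.
Qed.

Lemma linop_eop i : linop (eop E i).
Proof.
move=> c F G; apply: functional_extensionality => b; rewrite /eop.
by rewrite linearD linearZ.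
Qed.

Lemma linop_rA D : linop (rA D).
Proof.
move=> c F G; apply: functional_extensionality => b; rewrite /rA.
by rewrite scalerDr !scalerA mulrC.
Qed.

Lemma linop_scale c : linop (fun F b => c *: F b).
Proof.
move=> d F G; apply: functional_extensionality => b.
by rewrite scalerDr !scalerA mulrC.
Qed.

Lemma xop_eop i j (H : PV) : xop i (eop E j H) = eop E j (xop i H).
Proof.
apply: functional_extensionality => b; rewrite /xop /eop.
by case: ifP => _; rewrite ?linear0.
Qed.

Lemma Top_eop i j (H : PV) : Top mu i (eop E j H) = eop E j (Top mu i H).
Proof.
apply: functional_extensionality => b; rewrite !TopE /eop.
by rewrite [in RHS]TopE /= linearZ.
Qed.

Lemma rop_eop i j (H : PV) : rop i (eop E j H) = eop E j (rop i H).
Proof.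
apply: functional_extensionality => b; rewrite /rop /eop.
by rewrite /= linearZ.
Qed.

Lemma rA_eop (D : {set 'I_n}) j (H : PV) : rA D (eop E j H) = eop E j (rA D H).
Proof.
apply: functional_extensionality => b; rewrite /rA /eop.
by rewrite /= linearZ.
Qed.

Lemma Top_xop_ne i j (H : PV) : i != j -> Top mu j (xop i H) = xop i (Top mu j H).
Proof.
move=> ij; apply: functional_extensionality => b; rewrite /xop !TopE.
rewrite upd_ij // upd_ij; last by rewrite eq_sym.
case: ifP => _; last by rewrite scaler0.
by rewrite upd_comm // upd_ij // eq_sym.
Qed.

Lemma tc_rec i k : tc i k = (if (0 < k)%N then tc i k.-1 else 0) + 1 + (2 * mu i) * (-1) ^+ k.
Proof.
rewrite /tc; case: k => [|k] /=; first by rewrite !expr0 expr1; ring.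
rewrite !exprS; ring.
Qed.

Lemma Top_xop_eq i (H : PV) b :
  Top mu i (xop i H) b = xop i (Top mu i H) b + (H b + (2 * mu i) *: rop i H b).
Proof.
rewrite TopE {1}/xop upd_ii ltn0Sn upd_upd upd_id /rop.
rewrite {1}tc_rec !scalerDl scale1r -scalerA addrA; congr (_ + _ + _).
rewrite /xop; case: ifP => bi; last by rewrite scale0r.
by rewrite TopE upd_ii prednK // upd_upd upd_id.
Qed.

Lemma xop_xop i k (H : PV) : xop i (xop k H) = xop k (xop i H).
Proof.
apply: functional_extensionality => b; rewrite /xop.
case: (eqVneq i k) => [->//|ik].
rewrite (@upd_ij i k); last by rewrite eq_sym.
rewrite (@upd_ij k i) //.
case: (0 < b i)%N; case: (0 < b k)%N => //.
by rewrite upd_comm // eq_sym.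
Qed.

Lemma Top_Top j l (H : PV) : Top mu j (Top mu l H) = Top mu l (Top mu j H).
Proof.
apply: functional_extensionality => b; rewrite !TopE.
case: (eqVneq j l) => [->//|jl].
rewrite (@upd_ij j l); last by rewrite eq_sym.
by rewrite (@upd_ij l j) // !scalerA mulrC (@upd_comm l j) // eq_sym.
Qed.

Lemma rop_xop k i (H : PV) : k != i -> rop k (xop i H) = xop i (rop k H).
Proof.
move=> ki; apply: functional_extensionality => b; rewrite /rop /xop.
case: ifP => _; last by rewrite scaler0.
by rewrite upd_ij.
Qed.

Lemma rop_Top k i (H : PV) : k != i -> rop k (Top mu i H) = Top mu i (rop k H).
Proof.
move=> ki; apply: functional_extensionality => b; rewrite /rop !TopE.
by rewrite upd_ij // !scalerA mulrC.
Qed.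

Lemma rop_rop k i (H : PV) : rop k (rop i H) = rop i (rop k H).
Proof.
apply: functional_extensionality => b; rewrite /rop.
by rewrite !scalerA mulrC.
Qed.

Lemma rA_sum_upd (D : {set 'I_n}) k (a : midx n) v : k \notin D ->
  \sum_(i in D) upd k a v i = \sum_(i in D) a i :> nat.
Proof.
move=> kD; apply: eq_bigr => i iD; rewrite upd_ij //.
by apply: contraNneq kD => <-.
Qed.

Lemma rA_xop (D : {set 'I_n}) k (H : PV) : k \notin D -> rA D (xop k H) = xop k (rA D H).
Proof.
move=> kD; apply: functional_extensionality => b; rewrite /rA /xop.
case: ifP => _; last by rewrite scaler0.
by rewrite rA_sum_upd.
Qed.

Lemma rA_Top (D : {set 'I_n}) k (H : PV) : k \notin D -> rA D (Top mu k H) = Top mu k (rA D H).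
Proof.
move=> kD; apply: functional_extensionality => b; rewrite /rA !TopE.
by rewrite rA_sum_upd // !scalerA mulrC.
Qed.

Lemma rA_rop (D : {set 'I_n}) k (H : PV) : rA D (rop k H) = rop k (rA D H).
Proof.
apply: functional_extensionality => b; rewrite /rA /rop.
by rewrite !scalerA mulrC.
Qed.

Lemma two_neq0 : (2 : R) != 0.
Proof. by rewrite pnatr_eq0. Qed.

Lemma ee_sq i (v : V) : e i (e i v) = - v.
Proof.
have h := cliff i i v; rewrite eqxx in h.
apply: (scalerI two_neq0).
by rewrite scalerN -scaleNr -h -[2]/(1 + 1) scalerDl scale1r.
Qed.

Lemma ee_anti i j (v : V) : i != j -> e j (e i v) = - e i (e j v).
Proof.
move=> ij; have h := cliff i j v; rewrite (negbTE ij) scale0r in h.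
by apply/eqP; rewrite -addr_eq0 addrC h.
Qed.

Definition Rk k (H : PV) : PV := fun b => mu k *: rop k H b.
Definition Kk i j (H : PV) : PV := fun b => e i (e j (xop i (Top mu j H) b)).
Definition rho (B : {set 'I_n}) (H : PV) : PV := fun b => \sum_(k in B) Rk k H b.
Definition NN (B : {set 'I_n}) (H : PV) : PV :=
  fun b => \sum_(k in B) \sum_(l in B :\ k) Kk k l H b.

Lemma xA_DA B (H : PV) b :
  xA E B (DA mu E B H) b = \sum_(i in B) \sum_(j in B) e i (e j (xop i (Top mu j H) b)).
Proof.
rewrite /xA /DA /eop; apply: eq_bigr => i _.
rewrite (linop_sum (linop_xop i)) linear_sum; apply: eq_bigr => j _.
by rewrite (xop_eop i j).
Qed.

Lemma DA_xA B (H : PV) b :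
  DA mu E B (xA E B H) b = \sum_(i in B) \sum_(j in B) e j (e i (Top mu j (xop i H) b)).
Proof.
rewrite /xA /DA exchange_big /=; apply: eq_bigr => j _.
rewrite /eop (linop_sum (linop_Top j)) linear_sum; apply: eq_bigr => i _.
by rewrite (Top_eop j i).
Qed.

Lemma term_eq i j (H : PV) b :
  e i (e j (xop i (Top mu j H) b)) - e j (e i (Top mu j (xop i H) b)) =
  if i == j then H b + (2 * mu i) *: rop i H b
  else 2 *: e i (e j (xop i (Top mu j H) b)).
Proof.
case: (eqVneq i j) => [<-|ij].
  by rewrite Top_xop_eq !linearD /= addrA subrr add0r !ee_sq !opprK.
rewrite Top_xop_ne // (ee_anti _ ij) opprK -[2]/(1 + 1) scalerDl scale1r.
by [].
Qed.

Lemma SA_form B (H : PV) b :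
  SA mu E B H b = ((#|B|%:R - 1) / 2) *: H b + rho B H b + NN B H b.
Proof.
rewrite /SA xA_DA DA_xA -sumrB.
have inner : forall i, i \in B ->
  \sum_(j in B) e i (e j (xop i (Top mu j H) b)) -
  \sum_(j in B) e j (e i (Top mu j (xop i H) b)) =
  (H b + (2 * mu i) *: rop i H b) + 2 *: \sum_(j in B :\ i) Kk i j H b.
  move=> i iB; rewrite -sumrB (bigD1 i iB) /= term_eq eqxx; congr (_ + _).
  rewrite scaler_sumr; apply: eq_big => [j|j /andP [_ ji]].
    by rewrite in_setD1 andbC.
  by rewrite term_eq eq_sym (negbTE ji).
rewrite (eq_bigr _ inner) big_split /= big_split /= sumr_const -scaler_sumr.
have -> : \sum_(i in B) (2 * mu i) *: rop i H b = 2 *: rho B H b.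
  rewrite /rho /Rk scaler_sumr; apply: eq_bigr => i _; by rewrite [RHS]scalerA.
rewrite -/(NN B H b) -scaler_nat.
set h := H b; set x := rho B H b; set y := NN B H b.
rewrite scalerBr !scalerDr !scalerA mulVf ?two_neq0 // !scale1r mulrBl mul1r scalerBl (mulrC _ #|B|%:R).
by rewrite addrAC (addrAC _ x).
Qed.

Lemma linop_Rk k : linop (Rk k).
Proof. exact: (linop_comp (linop_scale (mu k)) (linop_rop k)). Qed.

Lemma linop_Kk i j : linop (Kk i j).
Proof.
exact: (linop_comp (linop_eop i) (linop_comp (linop_eop j)
          (linop_comp (linop_xop i) (linop_Top j)))).
Qed.

Lemma linop_sumop (I : Type) (r : seq I) (P : pred I) (O : I -> PV -> PV) :
  (forall t, linop (O t)) ->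
  linop (fun H b => \sum_(t <- r | P t) O t H b).
Proof.
move=> lO c F G; apply: functional_extensionality => b.
rewrite scaler_sumr -big_split /=; apply: eq_bigr => t _.
by rewrite (lO t).
Qed.

Lemma linop_rho B : linop (rho B).
Proof. exact: (linop_sumop _ _ linop_Rk). Qed.

Lemma linop_NN B : linop (NN B).
Proof.
apply: (linop_sumop _ _ (O := fun k H b => \sum_(l in B :\ k) Kk k l H b)).
move=> k; exact: (linop_sumop _ _ (linop_Kk k)).
Qed.

Lemma SA_formF B (H : PV) :
  SA mu E B H = fun b => ((#|B|%:R - 1) / 2) *: H b + rho B H b + NN B H b.
Proof. by apply: functional_extensionality => b; rewrite SA_form. Qed.

Lemma linop_SA B : linop (SA mu E B).
Proof.
move=> c F G; apply: functional_extensionality => b.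
rewrite !SA_form linop_rho linop_NN !scalerDr !scalerA (mulrC c).
by rewrite [X in X + _ = _]addrACA [LHS]addrACA.
Qed.

Lemma rA_Rk (D : {set 'I_n}) k (H : PV) : rA D (Rk k H) = Rk k (rA D H).
Proof.
apply: functional_extensionality => b; rewrite /rA /Rk /rop.
by rewrite !scalerA; congr (_ *: _); ring.
Qed.

Lemma rA_Kk (D : {set 'I_n}) k l (H : PV) : k \notin D -> l \notin D ->
  rA D (Kk k l H) = Kk k l (rA D H).
Proof.
move=> kD lD.
change (Kk k l H) with (eop E k (eop E l (xop k (Top mu l H)))).
change (Kk k l (rA D H)) with (eop E k (eop E l (xop k (Top mu l (rA D H))))).
by rewrite !rA_eop rA_xop // rA_Top.
Qed.

Lemma rA_SA (D B : {set 'I_n}) (H : PV) : (forall k, k \in B -> k \notin D) ->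
  rA D (SA mu E B H) = SA mu E B (rA D H).
Proof.
move=> hD; apply: functional_extensionality => b.
rewrite SA_form {1}/rA SA_form !scalerDr.
congr (_ + _ + _).
- by rewrite /rA !scalerA mulrC.
- rewrite /rho scaler_sumr; apply: eq_bigr => k _.
  by rewrite -rA_Rk.
- rewrite /NN scaler_sumr; apply: eq_bigr => k kB.
  rewrite scaler_sumr; apply: eq_bigr => l lB.
  rewrite -rA_Kk //; first exact: hD.
  by apply: hD; move: lB; rewrite in_setD1 => /andP [].
Qed.

Lemma rop_rA i (H : PV) : rop i H = rA [set i] H.
Proof.
by apply: functional_extensionality => b; rewrite /rA /rop big_set1.
Qed.

Lemma rop_SA i (B : {set 'I_n}) (H : PV) : i \notin B -> rop i (SA mu E B H) = SA mu E B (rop i H).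
Proof.
move=> iB; rewrite !rop_rA rA_SA // => k kB; rewrite in_set1.
by apply: contraNneq iB => <-.
Qed.

Lemma Rk_Kk k i j (H : PV) : k != i -> k != j ->
  Rk k (Kk i j H) = Kk i j (Rk k H).
Proof.
move=> ki kj; rewrite /Rk.
rewrite (linopZ (linop_Kk i j)); apply: functional_extensionality => b.
congr (_ *: _).
change (Kk i j H) with (eop E i (eop E j (xop i (Top mu j H)))).
change (Kk i j (rop k H)) with (eop E i (eop E j (xop i (Top mu j (rop k H))))).
by rewrite !rop_eop rop_xop // rop_Top.
Qed.

Lemma quartic i j k l (H : PV) b :
  i != j -> i != k -> i != l -> j != k -> j != l -> k != l ->
  Kk i j (Kk k l H) b + Kk k j (Kk i l H) b = 0.
Proof.
move=> ij ik il jk jl kl.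
change (Kk k l H) with (eop E k (eop E l (xop k (Top mu l H)))).
change (Kk i l H) with (eop E i (eop E l (xop i (Top mu l H)))).
rewrite /Kk !Top_eop !xop_eop /eop.
rewrite (Top_xop_ne _ _ (i:=k) (j:=j)); last by rewrite eq_sym.
rewrite (Top_xop_ne _ _ (i:=i) (j:=j)) //.
rewrite (xop_xop k i).
set u := e l _.
rewrite (ee_anti _ jk) (ee_anti _ ik) linearN /= (ee_anti _ ij).
by rewrite !opprK subrr.
Qed.

Lemma setD1C (A : {set 'I_n}) i j : A :\ i :\ j = A :\ j :\ i.
Proof. by apply/setP => x; rewrite !in_setD1 andbCA. Qed.

Lemma cardD1R (B : {set 'I_n}) k : k \in B -> #|B :\ k|%:R = #|B|%:R - 1 :> R.
Proof. by move=> kB; rewrite [in RHS](cardsD1 k B) kB natrD addrAC subrr add0r. Qed.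

Lemma swap2 (U : zmodType) (B : {set 'I_n}) (F : 'I_n -> 'I_n -> U) :
  \sum_(i in B) \sum_(j in B :\ i) F i j = \sum_(i in B) \sum_(j in B :\ i) F j i.
Proof.
rewrite (exchange_big_dep (fun j => j \in B)) /=; last first.
  by move=> i j _; rewrite in_setD1 => /andP [].
apply: eq_bigr => j jB; apply: eq_bigl => i.
by rewrite !in_setD1 jB andbT andbC eq_sym.
Qed.

Lemma T12 (U : zmodType) (A : {set 'I_n}) (W : 'I_n -> 'I_n -> 'I_n -> U) :
  \sum_(i in A) \sum_(j in A :\ i) \sum_(k in A :\ i :\ j) W i j k =
  \sum_(i in A) \sum_(j in A :\ i) \sum_(k in A :\ i :\ j) W j i k.
Proof.
rewrite (swap2 _ (fun i j => \sum_(k in A :\ i :\ j) W i j k)).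
apply: eq_bigr => i _; apply: eq_bigr => j _.
by rewrite setD1C.
Qed.

Lemma T23 (U : zmodType) (A : {set 'I_n}) (W : 'I_n -> 'I_n -> 'I_n -> U) :
  \sum_(i in A) \sum_(j in A :\ i) \sum_(k in A :\ i :\ j) W i j k =
  \sum_(i in A) \sum_(j in A :\ i) \sum_(k in A :\ i :\ j) W i k j.
Proof.
by apply: eq_bigr => i _; rewrite (swap2 _ (fun j k => W i j k)).
Qed.

Lemma SL1 (B : {set 'I_n}) (f : 'I_n -> V) :
  \sum_(j in B) \sum_(k in B :\ j) f k = (#|B|%:R - 1) *: \sum_(k in B) f k.
Proof.
rewrite (exchange_big_dep (fun j => j \in B)) /=; last first.
  by move=> i j _; rewrite in_setD1 => /andP [].
rewrite scaler_sumr; apply: eq_bigr => k kB.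
rewrite (eq_bigl (fun j => j \in B :\ k)); last first.
  by move=> j; rewrite !in_setD1 kB andbT andbC eq_sym.
by rewrite sumr_const -scaler_nat cardD1R.
Qed.

Lemma SL2 (B : {set 'I_n}) (g : 'I_n -> 'I_n -> V) :
  \sum_(j in B) \sum_(k in B :\ j) \sum_(l in B :\ j :\ k) g k l =
  (#|B|%:R - 2) *: \sum_(k in B) \sum_(l in B :\ k) g k l.
Proof.
rewrite (swap2 _ (fun j k => \sum_(l in B :\ j :\ k) g k l)) scaler_sumr.
apply: eq_bigr => k kB.
rewrite (eq_bigr (fun j => \sum_(l in B :\ k :\ j) g k l)); last first.
  by move=> j _; rewrite setD1C.
by rewrite SL1 cardD1R // -addrA -opprD.
Qed.

Lemma RkE k (H : PV) b : Rk k H b = (mu k * (-1) ^+ b k) *: H b.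
Proof. by rewrite /Rk /rop scalerA. Qed.

Lemma SA_pair i j (H : PV) b : i != j ->
  SA mu E [set i; j] H b =
  2^-1 *: H b + Rk i H b + Rk j H b + Kk i j H b + Kk j i H b.
Proof.
move=> ij.
have ij' : i \notin [set j] by rewrite in_set1.
rewrite SA_form cards2 ij /= /rho /NN !big_setU1 //= !big_set1 setU1K //.
rewrite (setUC [set i]) setU1K; last by rewrite in_set1 eq_sym.
rewrite !big_set1.
have -> : ((2%N)%:R - 1 : R) = 1 by rewrite -addn1 natrD addrK.
by rewrite mul1r !addrA.
Qed.

Lemma sumD1n (A : {set 'I_n}) i (f : 'I_n -> nat) : i \in A ->
  (\sum_(k in A) f k = f i + \sum_(k in A :\ i) f k)%N.
Proof.
move=> iA; rewrite (bigD1 i) //=; congr addn; apply: eq_bigl => k.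
by rewrite in_setD1 andbC.
Qed.

Lemma sign2 (x : nat) : (-1) ^+ x * (-1) ^+ x = 1 :> R.
Proof. by rewrite -exprD -signr_odd addnn odd_double. Qed.

Lemma rop_rAA (A : {set 'I_n}) i (F : PV) : i \in A -> rop i (rA A F) = rA (A :\ i) F.
Proof.
move=> iA; apply: functional_extensionality => b; rewrite /rop /rA scalerA.
by rewrite (sumD1n _ iA) exprD mulrA sign2 mul1r.
Qed.

Lemma rA_pair (A : {set 'I_n}) i j (F : PV) : i \in A -> j \in A :\ i ->
  rA [set i; j] (rA (A :\ i :\ j) F) = rA A F.
Proof.
move=> iA jA; apply: functional_extensionality => b; rewrite /rA scalerA.
have ij : i \notin [set j] by rewrite in_set1; move: jA; rewrite in_setD1 eq_sym => /andP [].
rewrite big_setU1 //= big_set1 (sumD1n _ iA) (sumD1n _ jA).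
by rewrite -exprD addnA.
Qed.

Lemma Gamma_pair (A : {set 'I_n}) i j (F : PV) : i \in A -> j \in A :\ i ->
  GammaA mu E [set i; j] (GammaA mu E (A :\ i :\ j) F)
  = SA mu E [set i; j] (SA mu E (A :\ i :\ j) (rA A F)).
Proof.
move=> iA jA; rewrite /GammaA rA_SA ?rA_pair // => k.
rewrite !in_setD1 in_set2 => /andP [kj /andP [ki _]].
by rewrite negb_or ki kj.
Qed.

Lemma Gamma_minus (A : {set 'I_n}) i (F : PV) : i \in A ->
  GammaA mu E (A :\ i) F = rop i (SA mu E (A :\ i) (rA A F)).
Proof.
by move=> iA; rewrite /GammaA rop_SA ?setD11 // rop_rAA.
Qed.

Lemma pair_sum (A : {set 'I_n}) (g : 'I_n -> 'I_n -> V) :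
  (forall i j, g i j = g j i) ->
  \sum_(i in A) \sum_(j in A | (i < j)%N) g i j
  = 2^-1 *: \sum_(i in A) \sum_(j in A :\ i) g i j.
Proof.
move=> gs.
set X := \sum_(i in A) \sum_(j in A | (i < j)%N) g i j.
have X2 : X = \sum_(i in A) \sum_(j in A | (j < i)%N) g i j.
  rewrite /X (exchange_big_dep (fun j => j \in A)) /=; last by move=> i j _ /andP [].
  apply: eq_bigr => j jA.
  rewrite (eq_bigl (fun i => (i \in A) && (i < j)%N)); last first.
    by move=> i; rewrite jA.
  by apply: eq_bigr => i _; rewrite gs.
have -> : \sum_(i in A) \sum_(j in A :\ i) g i j = X + X.
  rewrite {2}X2 /X -big_split /=.
  apply: eq_bigr => i iA.
  rewrite [LHS](bigID (fun j : 'I_n => (i < j)%N)) /=; congr (_ + _).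
    apply: eq_bigl => j; rewrite in_setD1.
    case: (ltnP i j) => h; last by rewrite !andbF.
    rewrite !andbT; case: (eqVneq j i) => // ji; by rewrite ji ltnn in h.
  apply: eq_bigl => j; rewrite in_setD1 -leqNgt.
  rewrite -(inj_eq val_inj) /= [(j < i)%N]ltn_neqAle.
  by case: (j \in A); rewrite /= ?andbT ?andbF.
by rewrite -mulr2n -scaler_nat scalerA mulVf ?two_neq0 // scale1r.
Qed.

Lemma sum_const_scale (B : {set 'I_n}) (c : R) (h : V) :
  \sum_(j in B) c *: h = (#|B|%:R * c) *: h.
Proof. by rewrite sumr_const -scaler_nat scalerA. Qed.

Lemma sumQ (B : {set 'I_n}) (H : PV) b :
  \sum_(j in B) SA mu E (B :\ j) H b =
  ((#|B|%:R * (#|B|%:R - 2)) / 2) *: H b + (#|B|%:R - 1) *: rho B H b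
  + (#|B|%:R - 2) *: NN B H b.
Proof.
rewrite (eq_bigr (fun j => ((#|B|%:R - 2) / 2) *: H b + rho (B :\ j) H b
                          + NN (B :\ j) H b)); last first.
  move=> j jB; rewrite SA_form cardD1R //.
  by congr (_ *: _ + _ + _); congr (_ / _); ring.
rewrite !big_split /= sum_const_scale mulrA.
congr (_ + _ + _).
  by rewrite /rho SL1.
by rewrite /NN SL2.
Qed.

Definition sc i (b : midx n) : R := mu i * (-1) ^+ b i.

Lemma scal3 (s c1 c2 c3 : R) (x y z : V) :
  s *: (c1 *: x + c2 *: y + c3 *: z) = c1 *: (s *: x) + c2 *: (s *: y) + c3 *: (s *: z).
Proof. by rewrite !scalerDr !scalerA (mulrC s c1) (mulrC s c2) (mulrC s c3). Qed.

Lemma rhoE (B : {set 'I_n}) (H : PV) b : rho B H b = \sum_(i in B) sc i b *: H b.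
Proof. by apply: eq_bigr => i _; rewrite RkE. Qed.

Lemma B1 (A : {set 'I_n}) (G : PV) b :
  \sum_(i in A) \sum_(j in A :\ i) SA mu E (A :\ i :\ j) G b =
  ((#|A|%:R * (#|A|%:R - 1) * (#|A|%:R - 3)) / 2) *: G b
  + ((#|A|%:R - 1) * (#|A|%:R - 2)) *: rho A G b
  + ((#|A|%:R - 2) * (#|A|%:R - 3)) *: NN A G b.
Proof.
rewrite (eq_bigr (fun i => (((#|A|%:R - 1) * (#|A|%:R - 3)) / 2) *: G b
    + (#|A|%:R - 2) *: rho (A :\ i) G b + (#|A|%:R - 3) *: NN (A :\ i) G b)); last first.
  move=> i iA; rewrite sumQ cardD1R //.
  by congr (_ *: _ + _ *: _ + _ *: _); ring.
rewrite !big_split /= sum_const_scale -!scaler_sumr.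
have -> : \sum_(i in A) rho (A :\ i) G b = (#|A|%:R - 1) *: rho A G b by rewrite /rho SL1.
have -> : \sum_(i in A) NN (A :\ i) G b = (#|A|%:R - 2) *: NN A G b by rewrite /NN SL2.
rewrite !scalerA.
by congr (_ *: _ + _ *: _ + _ *: _); ring.
Qed.

Definition PP (A : {set 'I_n}) (G : PV) b := \sum_(i in A) sc i b *: rho (A :\ i) G b.
Definition YY (A : {set 'I_n}) (G : PV) b := \sum_(i in A) sc i b *: NN (A :\ i) G b.

Lemma B2 (A : {set 'I_n}) (G : PV) b :
  \sum_(i in A) \sum_(j in A :\ i) Rk i (SA mu E (A :\ i :\ j) G) b =
  (((#|A|%:R - 1) * (#|A|%:R - 3)) / 2) *: rho A G b
  + (#|A|%:R - 2) *: PP A G b + (#|A|%:R - 3) *: YY A G b.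
Proof.
rewrite (eq_bigr (fun i => (((#|A|%:R - 1) * (#|A|%:R - 3)) / 2) *: (sc i b *: G b)
    + (#|A|%:R - 2) *: (sc i b *: rho (A :\ i) G b)
    + (#|A|%:R - 3) *: (sc i b *: NN (A :\ i) G b))); last first.
  move=> i iA.
  rewrite (eq_bigr (fun j => sc i b *: SA mu E (A :\ i :\ j) G b)); last first.
    by move=> j _; rewrite RkE.
  rewrite -scaler_sumr sumQ cardD1R // scal3.
  by congr (_ *: _ + _ *: _ + _ *: _); ring.
by rewrite !big_split /= -!scaler_sumr -rhoE.
Qed.

Lemma B2' (A : {set 'I_n}) (G : PV) b :
  \sum_(i in A) \sum_(j in A :\ i) Rk j (SA mu E (A :\ i :\ j) G) b =
  \sum_(i in A) \sum_(j in A :\ i) Rk i (SA mu E (A :\ i :\ j) G) b.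
Proof.
rewrite (swap2 _ (fun i j => Rk j (SA mu E (A :\ i :\ j) G) b)).
by apply: eq_bigr => i _; apply: eq_bigr => j _; rewrite setD1C.
Qed.

Lemma B4 (A : {set 'I_n}) (G : PV) b :
  \sum_(i in A) Rk i (SA mu E (A :\ i) G) b =
  ((#|A|%:R - 2) / 2) *: rho A G b + PP A G b + YY A G b.
Proof.
rewrite (eq_bigr (fun i => ((#|A|%:R - 2) / 2) *: (sc i b *: G b)
    + 1 *: (sc i b *: rho (A :\ i) G b)
    + 1 *: (sc i b *: NN (A :\ i) G b))); last first.
  move=> i iA; rewrite RkE SA_form cardD1R // -/(sc i b).
  rewrite !scale1r !scalerDr; congr (_ + _ + _).
  by rewrite !scalerA; congr (_ *: _); ring.
by rewrite !big_split /= -!scaler_sumr -rhoE !scale1r.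
Qed.

Lemma Kk_SA i j (C : {set 'I_n}) (G : PV) b : i \notin C -> j \notin C ->
  Kk i j (SA mu E C G) b =
  ((#|C|%:R - 1) / 2) *: Kk i j G b + \sum_(k in C) sc k b *: Kk i j G b
  + \sum_(k in C) \sum_(l in C :\ k) Kk i j (Kk k l G) b.
Proof.
move=> iC jC.
rewrite SA_formF (linopD (linop_Kk i j)) (linopD (linop_Kk i j)) (linopZ (linop_Kk i j)).
congr (_ + _ + _).
  rewrite /rho (linop_sum (linop_Kk i j)); apply: eq_bigr => k kC.
  rewrite -Rk_Kk ?RkE //.
    by apply: contraNneq iC => <-.
  by apply: contraNneq jC => <-.
rewrite /NN (linop_sum (linop_Kk i j)); apply: eq_bigr => k kC.
by rewrite (linop_sum (linop_Kk i j)).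
Qed.

Lemma setD3 (A : {set 'I_n}) i j k : A :\ k :\ i :\ j = A :\ i :\ j :\ k.
Proof.
apply/setP => x; rewrite !in_setD1.
by case: (x == i); case: (x == j); case: (x == k).
Qed.

Lemma quartic_sum (A : {set 'I_n}) (G : PV) b :
  \sum_(i in A) \sum_(j in A :\ i) \sum_(k in A :\ i :\ j)
    \sum_(l in A :\ i :\ j :\ k) Kk i j (Kk k l G) b = 0.
Proof.
set Z := \sum_(i in A) _.
have HZ : Z = \sum_(i in A) \sum_(j in A :\ i) \sum_(k in A :\ i :\ j)
    \sum_(l in A :\ i :\ j :\ k) Kk k j (Kk i l G) b.
  rewrite /Z T23 T12 T23.
  apply: eq_bigr => i _; apply: eq_bigr => j _; apply: eq_bigr => k _.
  have -> // : A :\ k :\ j :\ i = A :\ i :\ j :\ k.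
  apply/setP => x; rewrite !in_setD1.
  by case: (x == i); case: (x == j); case: (x == k).
have : Z + Z = 0.
  rewrite {2}HZ /Z -big_split big1 // => i iA.
  rewrite -big_split big1 // => j jA.
  rewrite -big_split big1 // => k kA.
  rewrite -big_split big1 // => l lA.
  move: jA kA lA; rewrite !in_setD1.
  move=> /andP [ji _] /andP [kj /andP [ki _]] /andP [lk /andP [lj /andP [li _]]].
  by apply: quartic; rewrite // eq_sym.
move/eqP; rewrite -mulr2n -scaler_nat scaler_eq0 (negbTE two_neq0) /=.
by move/eqP.
Qed.

Lemma B3 (A : {set 'I_n}) (G : PV) b :
  \sum_(i in A) \sum_(j in A :\ i) Kk i j (SA mu E (A :\ i :\ j) G) b =
  ((#|A|%:R - 3) / 2) *: NN A G b + YY A G b.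
Proof.
rewrite (eq_bigr (fun i => \sum_(j in A :\ i)
   (((#|A|%:R - 3) / 2) *: Kk i j G b
    + \sum_(k in A :\ i :\ j) sc k b *: Kk i j G b
    + \sum_(k in A :\ i :\ j) \sum_(l in A :\ i :\ j :\ k) Kk i j (Kk k l G) b))); last first.
  move=> i iA; apply: eq_bigr => j jA.
  rewrite Kk_SA; last first.
  - by rewrite !in_setD1 eqxx.
  - by rewrite !in_setD1 eqxx andbF.
  rewrite cardD1R // cardD1R //.
  by congr (_ *: _ + _ + _); congr (_ / _); ring.
under eq_bigr => i _ do rewrite !big_split /=.
rewrite !big_split /= quartic_sum addr0.
congr (_ + _).
  rewrite /NN scaler_sumr; apply: eq_bigr => i _.
  by rewrite scaler_sumr.
rewrite T23 T12 /YY; apply: eq_bigr => i _.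
rewrite /NN scaler_sumr; apply: eq_bigr => j _.
by rewrite scaler_sumr.
Qed.

Lemma B3' (A : {set 'I_n}) (G : PV) b :
  \sum_(i in A) \sum_(j in A :\ i) Kk j i (SA mu E (A :\ i :\ j) G) b =
  \sum_(i in A) \sum_(j in A :\ i) Kk i j (SA mu E (A :\ i :\ j) G) b.
Proof.
rewrite (swap2 _ (fun i j => Kk j i (SA mu E (A :\ i :\ j) G) b)).
by apply: eq_bigr => i _; apply: eq_bigr => j _; rewrite setD1C.
Qed.

Definition lc5 (g r N P Y : V) (a1 a2 a3 a4 a5 : R) :=
  a1 *: g + a2 *: r + a3 *: N + a4 *: P + a5 *: Y.

Lemma lc5D g r N P Y a1 a2 a3 a4 a5 b1 b2 b3 b4 b5 :
  lc5 g r N P Y a1 a2 a3 a4 a5 + lc5 g r N P Y b1 b2 b3 b4 b5 =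
  lc5 g r N P Y (a1 + b1) (a2 + b2) (a3 + b3) (a4 + b4) (a5 + b5).
Proof.
rewrite /lc5 !scalerDl.
rewrite [in LHS]addrACA [X in X + _ = _]addrACA [X in X + _ + _ = _]addrACA.
by rewrite [X in X + _ + _ + _ = _]addrACA.
Qed.

Lemma lc5Z g r N P Y a1 a2 a3 a4 a5 c :
  c *: lc5 g r N P Y a1 a2 a3 a4 a5 = lc5 g r N P Y (c * a1) (c * a2) (c * a3) (c * a4) (c * a5).
Proof. by rewrite /lc5 !scalerDr !scalerA. Qed.

Lemma lc5N g r N P Y a1 a2 a3 a4 a5 :
  - lc5 g r N P Y a1 a2 a3 a4 a5 = lc5 g r N P Y (- a1) (- a2) (- a3) (- a4) (- a5).
Proof. by rewrite /lc5 !opprD !scaleNr. Qed.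

Lemma main_sec (A : {set 'I_n}) (F : PV) :
  CA mu E A F = (fun a => (#|A|%:R * (#|A|%:R - 3) / 4) *: GammaA mu E A F a).
Proof.
apply: functional_extensionality => a; rewrite /CA.
set G := rA A F.
rewrite (@pair_sum A (fun i j => GammaA mu E [set i; j] (GammaA mu E (A :\ i :\ j) F) a)); last first.
  move=> i j; rewrite setD1C; congr (GammaA _ _ _ _ _).
  by apply/setP => x; rewrite !in_set2 orbC.
rewrite (eq_bigr (fun i => \sum_(j in A :\ i)
   (2^-1 *: SA mu E (A :\ i :\ j) G a + Rk i (SA mu E (A :\ i :\ j) G) a
    + Rk j (SA mu E (A :\ i :\ j) G) a + Kk i j (SA mu E (A :\ i :\ j) G) a
    + Kk j i (SA mu E (A :\ i :\ j) G) a))); last first.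
  move=> i iA; apply: eq_bigr => j jA.
  rewrite Gamma_pair // SA_pair //.
  by move: jA; rewrite in_setD1 eq_sym => /andP [].
rewrite [X in _ - _ *: X](eq_bigr (fun i => Rk i (SA mu E (A :\ i) G) a)); last first.
  by move=> i iA; rewrite Gamma_minus.
under eq_bigr => i _ do rewrite !big_split /=.
rewrite !big_split /= B2' B3' B4 B3 B2.
have -> : \sum_(i in A) \sum_(j in A :\ i) 2^-1 *: SA mu E (A :\ i :\ j) G a
        = 2^-1 *: \sum_(i in A) \sum_(j in A :\ i) SA mu E (A :\ i :\ j) G a.
  rewrite scaler_sumr; apply: eq_bigr => i _; by rewrite scaler_sumr.
rewrite B1 /GammaA -/G SA_form.
set m := #|A|%:R.
set g := G a; set r := rho A G a; set N := NN A G a; set P := PP A G a; set Y := YY A G a.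
have e1 : forall c1 c2 c3 : R, c1 *: g + c2 *: r + c3 *: N = lc5 g r N P Y c1 c2 c3 0 0.
  by move=> *; rewrite /lc5 !scale0r !addr0.
have e2 : forall c1 c2 c3 : R, c1 *: r + c2 *: P + c3 *: Y = lc5 g r N P Y 0 c1 0 c2 c3.
  by move=> *; rewrite /lc5 !scale0r add0r addr0.
have e3 : forall c1 : R, c1 *: N + Y = lc5 g r N P Y 0 0 c1 0 1.
  by move=> *; rewrite /lc5 !scale0r !add0r addr0 scale1r.
have e4 : forall c1 : R, c1 *: r + P + Y = lc5 g r N P Y 0 c1 0 1 1.
  by move=> *; rewrite /lc5 !scale0r !add0r addr0 !scale1r.
have e5 : forall c1 : R, c1 *: g + r + N = lc5 g r N P Y c1 1 1 0 0.
  by move=> *; rewrite /lc5 !scale0r !addr0 !scale1r.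
rewrite e1 e2 e3 e4 e5 !(lc5Z, lc5D, lc5N).
by congr lc5; field.
Qed.

End Work.

Theorem lemma12 (R : realFieldType) (n : nat) (V : lmodType R)
  (mu : 'I_n -> R) (e : 'I_n -> {linear V -> V})
  (mu_pos : forall i, 0 < mu i)
  (cliff : forall (i j : 'I_n) (v : V),
      e i (e j v) + e j (e i v) = (if i == j then - 2 else 0) *: v)
  (A : {set 'I_n}) (F : PV n V) (hF : is_poly F) :
  CA mu (fun i => e i) A F
  = (fun a => (#|A|%:R * (#|A|%:R - 3) / 4) *: GammaA mu (fun i => e i) A F a).
Proof. exact: (@main_sec R n V mu e cliff A F). Qed.
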